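(* Let $n\ge 1$ and let $A\subseteq \mathbb{F}_3^n$ be a set such that the equation $a+b+c=0$ with $a,b,c\in A$ has no solutions except the trivial ones $a=b=c$. Then $$|A|\le 3\sum_{k=0}^{\lfloor 2n/3\rfloor}\binom{n}{k}_2 .$$
   Context: $\mathbb{F}_3=\{0,1,2\}$ is the field of integers modulo $3$. For integers $n\ge 0$ and $k$, the trinomial coefficient $\binom{n}{k}_2$ is defined as the coefficient of $x^k$ in $(1+x+x^2)^n$. *)

(* Defs.v *)
From HB Require Import structures.
From mathcomp Require Import all_boot all_order all_algebra.
Set Implicit Arguments. Unset Strict Implicit. Unset Printing Implicit Defensive.
Import GRing.Theory Num.Theory.
Local Open Scope ring_scope.

(* Trinomial coefficient binom(n,k)_2 := coefficient of x^k in (1+x+x^2)^n,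
   computed in {poly int}. *)
Definition trinom (n k : nat) : int :=
  ((1 + 'X + 'X^2 : {poly int}) ^+ n)`_k.

(* Main.v *)
Require Import Defs.
From HB Require Import structures.
From mathcomp Require Import all_boot all_order all_algebra.
Import GRing.Theory Num.Theory.
Local Open Scope ring_scope.
From mathcomp Require Import ring zify.
Set Implicit Arguments. Unset Strict Implicit. Unset Printing Implicit Defensive.
Notation F := 'F_3.
Definition J := ('I_3 * 'I_3 * 'I_3)%type.
Definition cf (t : J) : F :=
  match val t.1.1, val t.1.2, val t.2 with
  | 0, 0, 0 => 1
  | 2, 0, 0 | 0, 2, 0 | 0, 0, 2 => -1
  | 1, 1, 0 | 1, 0, 1 | 0, 1, 1 => -2
  | _, _, _ => 0 end.
Lemma factor (a b c : F) : 1 - (a + b + c) ^+ 2 =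
  \sum_(t : J) cf t * a ^+ t.1.1 * b ^+ t.1.2 * c ^+ t.2.
Proof.
rewrite -(pair_bigA _ (fun (t1 : 'I_3 * 'I_3) (t2 : 'I_3) => cf (t1,t2) * a ^+ t1.1 * b ^+ t1.2 * c ^+ t2)) /=.
rewrite -(pair_bigA _ (fun (t1 : 'I_3) (t2 : 'I_3) => \sum_(t3 < 3) cf (t1,t2,t3) * a ^+ t1 * b ^+ t2 * c ^+ t3)) /=.
rewrite !big_ord_recr !big_ord0 /= /cf /=.
rewrite !expr0 !expr1. ring.
Qed.
Lemma cf_deg (t : J) : cf t != 0 -> (t.1.1 + t.1.2 + t.2 <= 2)%N.
Proof.
by case: t => [[[[|[|[|?]]] ?] [[|[|[|?]]] ?]] [[|[|[|?]]] ?]].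
Qed.
Lemma sq01 (w : F) : 1 - w ^+ 2 = (w == 0)%:R.
Proof. by case: w => [[|[|[|?]]] ?] //; apply/val_inj. Qed.
Lemma three0 (w : F) : w + w + w = 0.
Proof. by case: w => [[|[|[|?]]] ?] //; apply/val_inj. Qed.

Notation Mon n := {ffun 'I_n -> 'I_3}.
Definition deg n (e : Mon n) : nat := (\sum_i (e i : nat))%N.
Definition Xm n (x : 'rV[F]_n) (e : Mon n) : F := \prod_i x 0 i ^+ e i.
Definition alpha n (f : {ffun 'I_n -> J}) : Mon n := [ffun i => (f i).1.1].
Definition beta n (f : {ffun 'I_n -> J}) : Mon n := [ffun i => (f i).1.2].
Definition gamma n (f : {ffun 'I_n -> J}) : Mon n := [ffun i => (f i).2].
Definition cfF n (f : {ffun 'I_n -> J}) : F := \prod_i cf (f i).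
Definition term n (f : {ffun 'I_n -> J}) (x y z : 'rV[F]_n) :=
  cfF f * Xm x (alpha f) * Xm y (beta f) * Xm z (gamma f).

Lemma ind_prod n (s : 'rV[F]_n) : \prod_i ((s 0 i == 0)%:R : F) = (s == 0)%:R.
Proof.
case: (eqVneq s 0) => [->|nz]; first by apply: big1 => i _; rewrite mxE eqxx.
have [i Hi] : exists i, s 0 i != 0.
  apply/existsP; apply: contraR nz => /existsPn H; apply/eqP/rowP => i.
  by rewrite mxE; apply/eqP; move: (H i); rewrite negbK.
by rewrite (bigD1 i) //= (negbTE Hi) mul0r.
Qed.

Lemma T_expand n (x y z : 'rV[F]_n) :
  ((x + y + z == 0)%:R : F) = \sum_(f : {ffun 'I_n -> J}) term f x y z.
Proof.
rewrite -ind_prod.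
transitivity (\prod_i \sum_(t : J) cf t * x 0 i ^+ t.1.1 * y 0 i ^+ t.1.2 * z 0 i ^+ t.2).
  by apply: eq_bigr => i _; rewrite -factor -sq01 !mxE.
rewrite bigA_distr_bigA; apply: eq_bigr => f _.
rewrite /term /cfF /Xm !big_split /=.
by congr (_ * _ * _ * _); apply: eq_bigr => i _; rewrite ffunE.
Qed.

Lemma deg_sum n (f : {ffun 'I_n -> J}) : cfF f != 0 ->
  (deg (alpha f) + deg (beta f) + deg (gamma f) <= 2 * n)%N.
Proof.
move=> H.
have Hi : forall i, cf (f i) != 0.
  move=> i; apply: contra H => /eqP H0.
  by rewrite /cfF (bigD1 i) //= H0 mul0r.
rewrite /deg -!big_split /=.
apply: (@leq_trans (\sum_(i < n) 2)%N); last by rewrite sum_nat_const card_ord mulnC.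
apply: leq_sum => i _; rewrite !ffunE; exact: cf_deg.
Qed.
Lemma support (p m : nat) (K : 'M[F]_(p, m)) :
  exists w : 'rV[F]_m, (w <= K)%MS /\ (\rank K <= \rank (diag_mx w))%N.
Proof.
set B := row_base K.
have rB : \rank B = \rank K by rewrite /B (eq_row_base K).
have hf : row_full B^T by rewrite /row_full mxrank_tr rB.
set f := fullrankfun hf.
have injf : injective f by apply: fullrankfun_inj.
set S := rowsub f B^T.
have uS : S^T \in unitmx by rewrite unitmx_tr fullrowsub_unit.
set x := (const_mx 1 : 'rV[F]_(\rank K)) *m invmx S^T.
exists (x *m B); split.
  by rewrite (submx_trans (submxMl _ _)) // (eq_row_base K).
have wf : forall i, (x *m B) 0 (f i) = 1.
  move=> i.
  have : (x *m S^T) 0 i = 1 by rewrite /x -mulmxA mulVmx // mulmx1 mxE.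
  by rewrite !mxE => <-; apply: eq_bigr => k _; rewrite !mxE.
set P := rowsub f (1%:M : 'M[F]_m).
have E : P *m diag_mx (x *m B) *m P^T = 1%:M.
    apply/matrixP => i j; rewrite mul_mx_diag !mxE.
    rewrite (bigD1 (f i)) //= big1 ?addr0; last first.
      by move=> k /negbTE nk; rewrite !mxE eq_sym nk mul0r mul0r.
    rewrite !mxE eqxx mul1r.
    have := wf i; rewrite mxE => ->.
    by rewrite mul1r (inj_eq injf) eq_sym.
apply: (@leq_trans (\rank (P *m diag_mx (x *m B) *m P^T))).
  by rewrite E mxrank1.
apply: leq_trans (mxrankM_maxl _ _) _.
exact: mxrankM_maxr.
Qed.

Lemma rankD_le m1 m2 (A B : 'M[F]_(m1, m2)) : (\rank (A + B)%R <= \rank A + \rank B)%N.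
Proof.
have h1 := mxrankS (addmx_sub_adds (submx_refl A) (submx_refl B)).
have h2 := (mxrank_adds_leqif A B).1.
exact: leq_trans h1 h2.
Qed.

Lemma rank_sum_le (I : finType) (P : pred I) m1 m2 (B : I -> 'M[F]_(m1, m2)) :
  (\rank (\sum_(i | P i) B i)%R <= \sum_(i | P i) \rank (B i))%N.
Proof.
elim/big_ind2: _ => [|A1 r1 A2 r2 h1 h2|i _] //; first by rewrite mxrank0.
exact: leq_trans (rankD_le _ _) (leq_add h1 h2).
Qed.

Lemma rank_factor (K I : finType) (m1 m2 : nat) (D : {set K}) (Q : pred I)
  (p : I -> K) (u : K -> 'I_m1 -> F) (h : I -> 'I_m2 -> F) :
  (forall f, Q f -> p f \in D) ->
  (\rank (\matrix_(i, j) (\sum_(f | Q f) u (p f) i * h f j)%R) <= #|D|)%N.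
Proof.
move=> HQ.
have -> : \matrix_(i, j) \sum_(f | Q f) u (p f) i * h f j =
   (\sum_(e in D) (\col_i u e i) *m (\row_j \sum_(f | Q f && (p f == e)) h f j))%R.
  apply/matrixP => i j; rewrite !mxE summxE (partition_big p (mem D)) //=.
  apply: eq_bigr => e _; rewrite !mxE big_ord1 !mxE mulr_sumr.
  by apply: eq_bigr => f /andP[_ /eqP->].
apply: leq_trans (rank_sum_le _ _) _; rewrite -sum1_card; apply: leq_sum => e _.
exact: leq_trans (mxrankM_maxl _ _) (rank_leq_col _).
Qed.


Lemma poly_id n : (1 + 'X + 'X^2 : {poly int}) ^+ n = \sum_(e : Mon n) 'X^(deg e).
Proof.
rewrite -[n in LHS]card_ord -prodr_const.
have -> : (1 + 'X + 'X^2 : {poly int}) = \sum_(t < 3) 'X^t.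
  by rewrite !big_ord_recr big_ord0 /= add0r expr0 expr1.
rewrite bigA_distr_bigA; apply: eq_bigr => e _.
by rewrite /deg prodrXr.
Qed.

Lemma sum_eq_ind (d K : nat) : \sum_(j < K) ((d == j :> nat)%:R : int) = (d < K)%:R.
Proof.
elim: K => [|K IH]; first by rewrite big_ord0.
rewrite big_ord_recr /= IH ltnS [(d <= K)%N]leq_eqVlt.
by case: (ltngtP d K) => //= ->; rewrite ?addr0 ?add0r.
Qed.

Lemma count n k : \sum_(0 <= j < k.+1) trinom n j =
  (#|[set e : Mon n | (deg e <= k)%N]|)%:Z.
Proof.
rewrite big_mkord.
under eq_bigr => j _ do rewrite /trinom poly_id coef_sum.
rewrite exchange_big /=.
under eq_bigr => e _ do under eq_bigr => j _ do rewrite coefXn eq_sym.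
under eq_bigr => e _ do rewrite sum_eq_ind ltnS.
rewrite -natz -sum1_card natr_sum big_mkcond /=.
rewrite [RHS]big_mkcond; apply: eq_bigr => e _; rewrite inE; by case: ifP.
Qed.

Lemma main_nat (n : nat) (A : {set 'rV[F]_n}) :
  (forall a b c, a \in A -> b \in A -> c \in A -> a + b + c = 0 ->
     a = b /\ b = c) ->
  (#|A| <= 3 * #|[set e : Mon n | (deg e <= (2 * n) %/ 3)%N]|)%N.
Proof.
move=> cap.
set k := ((2 * n) %/ 3)%N.
set D := [set e : Mon n | (deg e <= k)%N].
pose a (i : 'I_#|A|) : 'rV[F]_n := enum_val i.
have aA : forall i, a i \in A by move=> i; apply: enum_valP.
have ainj : injective a by apply: enum_val_inj.
pose C : 'M[F]_(#|A|, #|D|) := \matrix_(l, j) Xm (a l) (enum_val j).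
have [w [wK rw]] := support (kermx C).
have wC : w *m C = 0 by apply/eqP; rewrite -sub_kermx.
have orth : forall e, e \in D -> \sum_l w 0 l * Xm (a l) e = 0.
  move=> e He.
  have [j ej] : exists j : 'I_#|D|, enum_val j = e.
    by exists (enum_rank_in He e); rewrite enum_rankK_in.
  transitivity ((w *m C) 0 j); last by rewrite wC mxE.
  rewrite mxE; apply: eq_bigr => l _.
  by rewrite /C mxE ej.
pose Q1 := fun f : {ffun 'I_n -> J} => (deg (alpha f) <= k)%N.
pose Q2 := fun f : {ffun 'I_n -> J} => ~~ Q1 f && (deg (beta f) <= k)%N.
have Q3deg : forall f, ~~ Q1 f -> ~~ (deg (beta f) <= k)%N -> cfF f != 0 ->
    gamma f \in D.
  move=> f h1 h2 /deg_sum h3; rewrite inE; rewrite /Q1 -!ltnNge in h1 h2.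
  rewrite /k; lia.
pose h1 f j := \sum_l w 0 l * (cfF f * Xm (a j) (beta f) * Xm (a l) (gamma f)).
pose h2 f i := \sum_l w 0 l * (cfF f * Xm (a i) (alpha f) * Xm (a l) (gamma f)).
pose M1 : 'M[F]_#|A| := \matrix_(i, j) \sum_(f | Q1 f) Xm (a i) (alpha f) * h1 f j.
pose M2 : 'M[F]_#|A| := \matrix_(i, j) \sum_(f | Q2 f) h2 f i * Xm (a j) (beta f).
have r1 : (\rank M1 <= #|D|)%N.
  by apply: (@rank_factor _ _ _ _ D Q1 (@alpha n) (fun e i => Xm (a i) e) h1) => f; rewrite inE.
have r2 : (\rank M2 <= #|D|)%N.
  rewrite -mxrank_tr.
  have -> : M2^T = \matrix_(i, j) \sum_(f | Q2 f) Xm (a i) (beta f) * h2 f j.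
    by apply/matrixP => i j; rewrite !mxE; apply: eq_bigr => f _; rewrite mulrC.
  by apply: (@rank_factor _ _ _ _ D Q2 (@beta n) (fun e i => Xm (a i) e) h2) => f /andP[_]; rewrite inE.
have E : diag_mx w = M1 + M2.
  apply/matrixP => i j; rewrite !mxE.
  have key : forall l, (a i + a j + a l == 0) = (i == j) && (j == l).
    move=> l; apply/eqP/andP => [H|[/eqP <- /eqP <-]].
      by case: (cap _ _ _ (aA i) (aA j) (aA l) H) => /ainj -> /ainj ->.
    by apply/rowP => c; rewrite !mxE three0.
  transitivity (\sum_l w 0 l * ((a i + a j + a l == 0)%:R : F)).
    rewrite (bigD1 i) //= big1 => [|l nli]; last first.
      rewrite key; case: (eqVneq i j) => [<-|_] /=; last by rewrite mulr0.
      by rewrite eq_sym (negbTE nli) mulr0.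
    rewrite (key i) addr0.
    case: (eqVneq i j) => [eij|nij] /=; last by rewrite mulr0.
    by rewrite eij mulr1.
  transitivity (\sum_l \sum_(f : {ffun 'I_n -> J}) w 0 l * term f (a i) (a j) (a l)).
    by apply: eq_bigr => l _; rewrite T_expand mulr_sumr.
  rewrite exchange_big /= (bigID Q1) /=.
  rewrite [X in _ + X](bigID (fun f => deg (beta f) <= k)%N) /=.
  rewrite [X in _ + (_ + X)]big1 ?addr0; last first.
    move=> f /andP[n1 n2].
    have -> : \sum_l w 0 l * term f (a i) (a j) (a l) = cfF f * Xm (a i) (alpha f)
        * Xm (a j) (beta f) * \sum_l w 0 l * Xm (a l) (gamma f).
      by rewrite mulr_sumr; apply: eq_bigr => l _; rewrite /term; ring.
    case: (eqVneq (cfF f) 0) => [->|nz]; first by rewrite !mul0r.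
    by rewrite orth ?mulr0 // Q3deg.
  congr (_ + _); apply: eq_bigr => f _.
    by rewrite /h1 mulr_sumr; apply: eq_bigr => l _; rewrite /term; ring.
  by rewrite /h2 mulr_suml; apply: eq_bigr => l _; rewrite /term; ring.
have rC : (\rank C <= #|D|)%N by apply: rank_leq_col.
have := rankD_le M1 M2; rewrite -E.
move: rw; rewrite mxrank_ker; lia.
Qed.

Unset Implicit Arguments.

Theorem mainTheorem1 (n : nat) (A : {set 'rV['F_3]_n}) :
  (1 <= n)%N ->
  (forall a b c, a \in A -> b \in A -> c \in A -> a + b + c = 0 ->
     a = b /\ b = c) ->
  (#|A|%:Z <= 3 * \sum_(0 <= k < ((2 * n) %/ 3).+1) trinom n k)%R.
Proof.
move=> _ cap.
rewrite count.
have := main_nat cap.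
by rewrite -PoszM lez_nat.
Qed.
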